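(* Let $T$ be a free simplicial $F_r$-tree in unprojectivized outer space and let $F\colon T\to T_+$ be a $\Lambda$-isometry. Let $d_0,\dots,d_m$ be directions at a common vertex of $T$ lying in a common gate (for the gate structure induced by $F$). Then $$\min_{i=1,\dots,m}\ell(\{d_{i-1},d_i\})\le \ell(\{d_0,d_m\}).$$
   Context: $F_r$ is the free group of rank $r\ge 3$ and $\varphi\in\mathrm{Out}(F_r)$ is nongeometric fully irreducible (no positive power of $\varphi$ preserves the conjugacy class of a nontrivial proper free factor, and $\varphi$ is not induced by a surface homeomorphism). Unprojectivized outer space $\widehat{CV}_r$ is the set of free, minimal, simplicial isometric actions of $F_r$ on metric simplicial trees (universal covers of marked metric graphs), up to equivariant isometry. $T_+$ is a fixed $\mathbb{R}$-tree representing the attracting point of $\varphi$ in $\partial CV_r$, and $\Lambda$ is the attracting lamination of $\varphi$, an $F_r$-invariant family of lines which, for any $T\in\widehat{CV}_r$, is realized by bi-infinite geodesics in $T$ (via $\partial T\cong\partial F_r$). A $\Lambda$-isometry on $T$ is an $F_r$-equivariant continuous map $T\to T_+$ whose restriction to each realized leaf of $\Lambda$ is an isometry onto a bi-infinite geodesic of $T_+$. A direction at a vertex $v$ is a germ of an edge issuing from $v$; a turn is an unordered pair of directions at the same vertex. For a turn $\{d_1,d_2\}$ with $d_i$ the initial direction of the edge $e_i$, $\ell(\{d_1,d_2\})$ is the length of the longest initial segments of $e_1$ and $e_2$ having the same image under $F$ (and $\ell(\{d,d\})=+\infty$ by convention); the turn is illegal if this length is positive. Gates at $v$ are the equivalence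 classes of directions at $v$ under the equivalence relation generated by illegal turns. *)

(* Defs.v *)
From HB Require Import structures.
From mathcomp Require Import all_boot all_order all_algebra.
From mathcomp Require Import boolp classical_sets reals ereal.
From Stdlib Require Import Relations.
Set Implicit Arguments. Unset Strict Implicit. Unset Printing Implicit Defensive.
Import Order.TTheory GRing.Theory Num.Theory.
Local Open Scope ring_scope.
Local Open Scope classical_set_scope.

(* A metric simplicial tree, presented combinatorially:
   - V : vertices, E : oriented edges, P : points of the geometric realization;
   - o e : origin of e, rv e : reversed edge (so o (rv e) is the terminus);
   - len e > 0 : length of e;
   - vpt v : the point of the realization at the vertex v;
   - at_ e t : the point at distance t from o e along e (0 <= t <= len e). *)

Fixpoint is_path (V E : Type) (o : E -> V) (rv : E -> E) (u w : V) (p : seq E)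
  : Prop :=
  match p with
  | [::] => u = w
  | e :: p' => o e = u /\ is_path o rv (o (rv e)) w p'
  end.

Fixpoint reduced (E : Type) (rv : E -> E) (p : seq E) : Prop :=
  match p with
  | e :: ((e' :: _) as p') => e' <> rv e /\ reduced rv p'
  | _ => True
  end.

Definition metric_simplicial_tree (R : realType) (V E P : Type)
  (o : E -> V) (rv : E -> E) (len : E -> R) (vpt : V -> P)
  (at_ : E -> R -> P) : Prop :=
  [/\ (forall e, rv (rv e) = e) /\ (forall e, rv e <> e) /\
      (forall e, 0 < len e) /\ (forall e, len (rv e) = len e),
      (forall e, at_ e 0 = vpt (o e)) /\
      (forall e t, 0 <= t <= len e -> at_ (rv e) t = at_ e (len e - t)),
      injective vpt /\
      (forall e e' t t', 0 < t < len e -> 0 < t' < len e' ->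
          at_ e t = at_ e' t' ->
          (e = e' /\ t = t') \/ (e' = rv e /\ t' = len e - t)) /\
      (forall e t w, 0 < t < len e -> at_ e t <> vpt w),
      (forall u w, exists p, is_path o rv u w p) &
      (forall u p, is_path o rv u u p -> reduced rv p -> p = [::]) ].

(* ell({d1,d2}) for directions d1, d2 (given by edges e1, e2 issuing from a
   common vertex): the length of the longest initial segments of e1 and e2
   having the same image under F; +oo by convention when d1 = d2. *)
Definition turn_len (R : realType) (E : eqType) (P X : Type)
  (len : E -> R) (at_ : E -> R -> P) (F : P -> X) (e1 e2 : E) : \bar R :=
  if e1 == e2 then +oo%E
  else ereal_sup [set s%:E | s in
         [set s : R | 0 <= s /\ s <= Num.min (len e1) (len e2) /\
            (forall t, 0 <= t <= s -> F (at_ e1 t) = F (at_ e2 t))]].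

Definition illegal_turn (R : realType) (V : Type) (E : eqType) (P X : Type)
  (o : E -> V) (len : E -> R) (at_ : E -> R -> P) (F : P -> X) (v : V)
  (e1 e2 : E) : Prop :=
  o e1 = v /\ o e2 = v /\ (0 < turn_len len at_ F e1 e2)%E.

Definition same_gate (R : realType) (V : Type) (E : eqType) (P X : Type)
  (o : E -> V) (len : E -> R) (at_ : E -> R -> P) (F : P -> X) (v : V)
  (e1 e2 : E) : Prop :=
  o e1 = v /\ o e2 = v /\ clos_refl_sym_trans E (illegal_turn o len at_ F v) e1 e2.

(* Main.v *)
Require Import Defs.
From HB Require Import structures.
From mathcomp Require Import all_boot all_order all_algebra.
From mathcomp Require Import boolp classical_sets reals ereal.
From mathcomp Require Import lra.
Import Order.TTheory GRing.Theory Num.Theory.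
Local Open Scope ring_scope.

Section Aux.
Variables (R : realType) (E : eqType) (P X : Type)
  (len : E -> R) (at_ : E -> R -> P) (F : P -> X).

Definition inS (e1 e2 : E) (s : R) : Prop :=
  0 <= s /\ s <= Num.min (len e1) (len e2) /\
  (forall t, 0 <= t <= s -> F (at_ e1 t) = F (at_ e2 t)).

Lemma inS_ub e1 e2 s : e1 != e2 -> inS e1 e2 s -> (s%:E <= turn_len len at_ F e1 e2)%E.
Proof.
move=> /negPf ne H; rewrite /turn_len ne.
by apply: ereal_sup_ubound; exists s.
Qed.

Lemma inS_lt e1 e2 s : e1 != e2 -> 0 <= s ->
  (s%:E < turn_len len at_ F e1 e2)%E -> inS e1 e2 s.
Proof.
move=> /negPf ne s0; rewrite /turn_len ne => /ereal_sup_gt [y [x [x0 [xm xag]] <-]].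
rewrite lte_fin => sx; split; first by [].
split; first by apply: le_trans xm; exact: ltW.
move=> t /andP[t0 ts]; apply: xag; rewrite t0 /=; apply: le_trans ts _; exact: ltW.
Qed.

End Aux.
Arguments inS {R E P X}.

Theorem lemma2p4 (R : realType) (V : Type) (E : eqType) (P X : Type)
  (o : E -> V) (rv : E -> E) (len : E -> R) (vpt : V -> P)
  (at_ : E -> R -> P)
  (HT : metric_simplicial_tree o rv len vpt at_)
  (F : P -> X) (v : V) (m : nat) (d : nat -> E)
  (Hd : forall i, (i <= m)%N -> o (d i) = v)
  (Hgate : forall i j, (i <= m)%N -> (j <= m)%N ->
             same_gate o len at_ F v (d i) (d j)) :
  (\big[Order.min/+oo%E]_(i < m) turn_len len at_ F (d i) (d i.+1)
     <= turn_len len at_ F (d 0%N) (d m))%E.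
Proof.
case: HT => [[_ [_ [lenp _]]] [at0 _] _ _ _].
set a := (\big[Order.min/+oo%E]_(i < m) _)%E.
have chain : forall s : R, 0 <= s ->
    (forall i, (i < m)%N -> d i = d i.+1 \/ inS len at_ F (d i) (d i.+1) s) ->
    d 0%N = d m \/ inS len at_ F (d 0%N) (d m) s.
  move=> s s0 H.
  suff: forall k, (k <= m)%N -> d 0%N = d k \/ inS len at_ F (d 0%N) (d k) s by apply.
  elim=> [|k IH] km; first by left.
  have km' : (k <= m)%N by apply: ltnW.
  case: (H k km) => [<- | [_ [sk agk]]]; first exact: IH.
  case: (IH km') => [-> | [_ [s0k ag0k]]].
    by right; split => //; split.
  right; split => //; split.
    rewrite le_min; apply/andP; split.
      by move: s0k; rewrite le_min => /andP[].
    by move: sk; rewrite le_min => /andP[].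
  by move=> t ts; rewrite ag0k // agk.
case: (eqVneq (d 0%N) (d m)) => [eq0m | ne0m].
  by rewrite /turn_len eq0m eqxx leey.
have S0 : (0%:E <= turn_len len at_ F (d 0%N) (d m))%E.
  apply: (@inS_ub R E P X len at_ F) => //; split => //; split.
    by rewrite le_min !ltW.
  move=> t /andP[t0 t0']; have -> : t = 0 by apply/eqP; rewrite eq_le t0 t0'.
  by rewrite !at0 !Hd.
have key : forall s : R, 0 <= s -> (s%:E < a)%E ->
    (s%:E <= turn_len len at_ F (d 0%N) (d m))%E.
  move=> s s0 sa.
  have [e0m|iS] : d 0%N = d m \/ inS len at_ F (d 0%N) (d m) s; last 2 first.
  - by rewrite e0m eqxx in ne0m.
  - by apply: (@inS_ub R E P X len at_ F).
  apply: chain => // i im.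
  case: (eqVneq (d i) (d i.+1)) => [-> | ne]; first by left.
  right; apply: (@inS_lt R E P X len at_ F) => //; apply: lt_le_trans sa _.
  by rewrite /a; have := @bigmin_le _ _ _ +oo%E (Ordinal im) (fun j : 'I_m => turn_len len at_ F (d j) (d j.+1)); apply.
move: S0 key; case: (turn_len _ _ _ _ _) => [q | | ] S0 key; last 2 first.
- by rewrite leey.
- by [].
clearbody a.
rewrite lee_fin in S0.
rewrite leNgt; apply/negP => qa.
move: qa key; case: a => [r | | ] qa key.
- rewrite lte_fin in qa.
  have h1 : 0 <= (q + r) / 2 by clear -S0 qa; lra.
  have h2 : (((q + r) / 2)%:E < r%:E)%E by rewrite lte_fin; clear -qa; lra.
  have := key _ h1 h2; rewrite lee_fin; clear -qa; lra.
- have h1 : 0 <= q + 1 by clear -S0; lra.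
  have := key _ h1 (ltey _); rewrite lee_fin; clear; lra.
- by [].
Qed.
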